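(* Let $K$ and $L$ be number fields (inside a fixed algebraic closure of $\mathbb{Q}$). Then \[\frac{1}{[\widetilde K\widetilde L:\mathbb{Q}]}\le \delta_{K,L}\le 1,\] where equality on the right holds if and only if $\widetilde K=\widetilde L$, and equality on the left holds if and only if $K=\mathbb{Q}$ or $L=\mathbb{Q}$.
   Context: $\widetilde E$ denotes the Galois closure of a number field $E$ over $\mathbb{Q}$, and $\widetilde K\widetilde L$ the compositum. $\delta_{K,L}:=\frac{2}{[\widetilde K\widetilde L:\mathbb{Q}]}+1-\frac{1}{[\widetilde K:\mathbb{Q}]}-\frac{1}{[\widetilde L:\mathbb{Q}]}$. *)

(* Defs.v *)
From HB Require Import structures.
From mathcomp Require Import all_boot all_order all_algebra all_fingroup all_field.
Set Implicit Arguments. Unset Strict Implicit. Unset Printing Implicit Defensive.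
Import GRing.Theory.
Local Open Scope ring_scope.

(* Ambient field: a finite normal (= Galois, char 0) extension L0 of Q,
   playing the role of the fixed algebraic closure (every pair of number
   fields lies in such an L0 together with their Galois closures). *)

Definition gal_closure (L0 : splittingFieldType rat) (K : {subfield L0})
  : {subfield L0} :=
  <<(\sum_(s in ('Gal({:L0} / 1%AS))%g) (s @: K))%VS>>%AS.

Definition degQ (L0 : splittingFieldType rat) (E : {vspace L0}) : rat :=
  (\dim E)%:R.

Definition delta (L0 : splittingFieldType rat) (K L : {subfield L0}) : rat :=
  2 / degQ (gal_closure K * gal_closure L)%AS + 1
  - 1 / degQ (gal_closure K) - 1 / degQ (gal_closure L).

(* Main.v *)
Require Import Defs.
From HB Require Import structures.
From mathcomp Require Import all_boot all_order all_algebra all_fingroup all_field.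
From mathcomp Require Import lra.
Import GRing.Theory Num.Theory.
Local Open Scope ring_scope.

Section F.
Variable L0 : splittingFieldType rat.

Lemma sub_gal_closure (K : {subfield L0}) : (K <= gal_closure K)%VS.
Proof.
rewrite /gal_closure /=; apply: subv_trans (sub_agenv _).
apply: (sumv_sup 1%g); first exact: group1.
apply/subvP => x Kx; rewrite -[x](gal_id {:L0} x) ; exact: memv_img.
Qed.

Lemma gal_closure1 : (gal_closure (1%AS : {subfield L0}) <= 1)%VS.
Proof.
rewrite /gal_closure /=; apply: agenv_sub_modl; first exact: subvv.
rewrite prodv1; apply/subv_sumP => s _.
by rewrite aimg1.
Qed.

Lemma dim1_eq (K : {subfield L0}) : \dim K = 1%N -> K = 1%AS.
Proof.
move=> dK; apply: val_inj => /=; apply/eqP; rewrite eq_sym eqEdim sub1v dK dimv1 //.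
Qed.

Lemma dimK1 (K : {subfield L0}) : (\dim (gal_closure K) == 1%N) = (K == 1%AS).
Proof.
apply/eqP/eqP => [d | ->].
  have e := dim1_eq _ d.
  apply: val_inj; apply/eqP; rewrite /= eqEsubv sub1v andbT.
  by have := sub_gal_closure K; rewrite e.
apply/eqP; rewrite eqn_leq adim_gt0 andbT.
by have := dimvS gal_closure1; rewrite dimv1.
Qed.
End F.
Lemma numx (x y z : rat) : 0 < x <= 1 -> 0 < y <= 1 -> 0 < z -> z <= x -> z <= y -> x * y <= z ->
  [/\ z <= 2 * z + 1 - x - y, 2 * z + 1 - x - y <= 1,
      (2 * z + 1 - x - y = 1 <-> z = x /\ z = y) &
      (z = 2 * z + 1 - x - y <-> x = 1 \/ y = 1)].
Proof.
move=> /andP[x0 x1] /andP[y0 y1] z0 zx zy xyz; split.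
- nra.
- lra.
- split; [move=> h; split; lra | move=> [-> ->]; lra].
- split.
  + move=> h.
    have : (1 - x) * (1 - y) = 0 by nra.
    by move/eqP; rewrite mulf_eq0 !subr_eq0 => /orP[/eqP <-|/eqP <-]; [left|right].
  + by case=> e; rewrite e in xyz *; lra.
Qed.

Lemma numn (a b c : nat) : (0 < a)%N -> (0 < b)%N -> (a <= c)%N -> (b <= c)%N -> (c <= a * b)%N ->
  let D := 2 / c%:R + 1 - 1 / a%:R - 1 / b%:R : rat in
  [/\ 1 / c%:R <= D, D <= 1, (D = 1 <-> c = a /\ c = b) &
      (1 / c%:R = D <-> a = 1%N \/ b = 1%N)].
Proof.
move=> a0 b0 ac bc cab D.
have c0 : (0 < c)%N by apply: leq_trans ac.
have P n : (0 < n)%N -> 0 < (n%:R : rat)^-1 <= 1.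
  by move=> n0; rewrite invr_gt0 ltr0n n0 /= invf_le1 ?ltr0n // ler1n.
have Q n m : (0 < n)%N -> (n <= m)%N -> (m%:R : rat)^-1 <= n%:R^-1.
  by move=> n0 nm; rewrite lef_pV2 ?posrE ?ltr0n // ?ler_nat //; apply: leq_trans nm.
have xyz : (a%:R : rat)^-1 * b%:R^-1 <= c%:R^-1.
  by rewrite -invfM -natrM; apply: Q => //; rewrite muln_gt0 a0 b0.
have z0 : 0 < (c%:R : rat)^-1 by rewrite invr_gt0 ltr0n.
have [h1 h2 h3 h4] := numx _ _ _ (P _ a0) (P _ b0) z0 (Q _ _ a0 ac) (Q _ _ b0 bc) xyz.
have E : D = 2 * c%:R^-1 + 1 - a%:R^-1 - b%:R^-1 by rewrite /D !mul1r.
have I n m : (n%:R : rat)^-1 = m%:R^-1 <-> n = m.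
  by split=> [|->] //; move/invr_inj/eqP; rewrite eqr_nat => /eqP.
rewrite E !mul1r; split => //.
- by rewrite h3 !I.
- have I1 n : (n%:R : rat)^-1 = 1 <-> n = 1%N.
    by rewrite -(I n 1) /= invr1.
  by rewrite h4 !I1.
Qed.

Theorem proposition2p12 (L0 : splittingFieldType rat) (K L : {subfield L0}) :
  [/\ 1 / degQ (gal_closure K * gal_closure L)%AS <= delta K L,
      delta K L <= 1,
      (delta K L = 1 <-> gal_closure K = gal_closure L) &
      (1 / degQ (gal_closure K * gal_closure L)%AS = delta K L
         <-> K = 1%AS \/ L = 1%AS)].
Proof.
set K' := gal_closure K; set L' := gal_closure L.
have ac : (\dim K' <= \dim (K' * L')%AS)%N by apply: dimvS; apply: field_subvMr.
have bc : (\dim L' <= \dim (K' * L')%AS)%N by apply: dimvS; apply: field_subvMl.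
have cab : (\dim (K' * L')%AS <= \dim K' * \dim L')%N by apply: dim_prodv.
have [h1 h2 h3 h4] := numn _ _ _ (adim_gt0 K') (adim_gt0 L') ac bc cab.
rewrite /delta /degQ -/K' -/L'; split => //.
- rewrite h3; split.
  + move=> [e1 e2]; apply: val_inj => /=.
    have E1 : (K' : {vspace L0}) = (K' * L')%VS.
      by apply/eqP; rewrite eqEdim field_subvMr e1 leqnn.
    have E2 : (L' : {vspace L0}) = (K' * L')%VS.
      by apply/eqP; rewrite eqEdim field_subvMl e2 leqnn.
    by rewrite E1 -E2.
  + by move=> e; rewrite e (_ : (L' * L')%AS = L') //; apply: val_inj; rewrite /= prodv_id.
- rewrite h4; split.
  + by case=> /eqP; rewrite dimK1 => /eqP ->; [left|right].
  + by case=> /eqP; rewrite -dimK1 => /eqP ->; [left|right].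
Qed.
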